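(* Suppose there is $x_0\in\mathbb{R}$ such that $k^2$ is continuous and piecewise continuously differentiable, nonincreasing on $(-\infty,x_0]$ and nondecreasing on $[x_0,\infty)$, with minimum value $k^2_{\min}$ (which may be negative). Let $\Delta>0$ satisfy $k^2_{\min}\le\Delta^2\le\min\{k_{+\infty}^2,k_{-\infty}^2\}$. Then $$T\ \ge\ \mathrm{sech}^2\left\{\frac12\ln\frac{k_{+\infty}k_{-\infty}}{\Delta^2}+\frac{\max_x\sqrt{\max\{0,\Delta^2-k^2(x)\}}}{\Delta}+\int_{\{x:\,k^2(x)<\Delta^2\}}\sqrt{\Delta^2-k^2}\;\mathrm{d}x\right\}.$$
   Context: Standing setup: $k^2:\mathbb{R}\to\mathbb{R}$ is a piecewise continuous function (it may be negative somewhere) with $k^2(x)\to k_{\pm\infty}^2$ as $x\to\pm\infty$, where $k_{\pm\infty}>0$ and $k^2-k_{\pm\infty}^2$ is integrable near $\pm\infty$. For the equation $u''+k^2(x)u=0$ there is a solution with $u(x)=e^{ik_{-\infty}x}+r\,e^{-ik_{-\infty}x}+o(1)$ as $x\to-\infty$ and $u(x)=\tau\,e^{ik_{+\infty}x}+o(1)$ as $x\to+\infty$; the transmission probability is $T=(k_{+\infty}/k_{-\infty})|\tau|^2$. Here $\mathrm{sech}=1/\cosh$. *)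

(* Defs.v *)
From Stdlib Require Import Reals Lra List.
Open Scope R_scope.

Definition sech (x : R) : R := / cosh x.

Definition lim_pinf (f : R -> R) (l : R) : Prop :=
  forall eps, 0 < eps -> exists M, forall x, M < x -> Rabs (f x - l) < eps.
Definition lim_minf (f : R -> R) (l : R) : Prop :=
  forall eps, 0 < eps -> exists M, forall x, x < M -> Rabs (f x - l) < eps.

Definition integrable_near_pinf (f : R -> R) : Prop :=
  exists M B, forall b (pr : Riemann_integrable (fun x => Rabs (f x)) M b),
    M <= b -> RiemannInt pr <= B.
Definition integrable_near_minf (f : R -> R) : Prop :=
  exists M B, forall a (pr : Riemann_integrable (fun x => Rabs (f x)) a M),
    a <= M -> RiemannInt pr <= B.

Definition piecewise_C1 (f : R -> R) : Prop :=
  exists (pts : list R) (d : R -> R),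
    forall x, ~ In x pts -> derivable_pt_lim f x (d x) /\ continuity_pt d x.

Definition improper_integral_R (g : R -> R) (I : R) : Prop :=
  (forall a b, a <= b -> exists pr : Riemann_integrable g a b, True) /\
  forall eps, 0 < eps -> exists M, forall a b (pr : Riemann_integrable g a b),
    a <= - M -> M <= b -> Rabs (RiemannInt pr - I) < eps.

Definition solves_real (k2 : R -> R) (v : R -> R) : Prop :=
  exists dv : R -> R,
    (forall x, derivable_pt_lim v x (dv x)) /\
    (forall x, derivable_pt_lim dv x (- k2 x * v x)).

(* Scattering solution u = ur + i ui with reflection r = rr + i ri and
   transmission tau = tr + i ti:
   u(x) = e^{i km x} + r e^{-i km x} + o(1)  (x -> -inf),
   u(x) = tau e^{i kp x} + o(1)              (x -> +inf). *)
Definition scattering_solution (k2 : R -> R) (km kp : R)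
  (ur ui : R -> R) (rr ri tr ti : R) : Prop :=
  solves_real k2 ur /\ solves_real k2 ui /\
  lim_minf (fun x => ur x - (cos (km * x) + rr * cos (km * x) + ri * sin (km * x))) 0 /\
  lim_minf (fun x => ui x - (sin (km * x) + ri * cos (km * x) - rr * sin (km * x))) 0 /\
  lim_pinf (fun x => ur x - (tr * cos (kp * x) - ti * sin (kp * x))) 0 /\
  lim_pinf (fun x => ui x - (tr * sin (kp * x) + ti * cos (kp * x))) 0.

Definition transmission (km kp tr ti : R) : R := (kp / km) * (tr ^ 2 + ti ^ 2).

(* Main.v *)
Require Import Defs.
From Stdlib Require Import Reals Lra Lia Psatz List Classical ClassicalEpsilon.
Open Scope R_scope.

Lemma dl_plus f g x a b l : derivable_pt_lim f x a -> derivable_pt_lim g x b ->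
  l = a + b -> derivable_pt_lim (fun z => f z + g z) x l.
Proof. intros H1 H2 ->. apply (derivable_pt_lim_plus f g x a b H1 H2). Qed.
Lemma dl_minus f g x a b l : derivable_pt_lim f x a -> derivable_pt_lim g x b ->
  l = a - b -> derivable_pt_lim (fun z => f z - g z) x l.
Proof. intros H1 H2 ->. apply (derivable_pt_lim_minus f g x a b H1 H2). Qed.
Lemma dl_mult f g x a b l : derivable_pt_lim f x a -> derivable_pt_lim g x b ->
  l = a * g x + f x * b -> derivable_pt_lim (fun z => f z * g z) x l.
Proof. intros H1 H2 ->. apply (derivable_pt_lim_mult f g x a b H1 H2). Qed.
Lemma dl_const c x l : l = 0 -> derivable_pt_lim (fun _ => c) x l.
Proof. intros ->. apply (derivable_pt_lim_const c x). Qed.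
Lemma dl_comp f g x a b l : derivable_pt_lim g x a -> derivable_pt_lim f (g x) b ->
  l = b * a -> derivable_pt_lim (fun z => f (g z)) x l.
Proof. intros H1 H2 ->. apply (derivable_pt_lim_comp g f x a b H1 H2). Qed.
Lemma dl_div f g x a b l : derivable_pt_lim f x a -> derivable_pt_lim g x b -> g x <> 0 ->
  l = (a * g x - b * f x) / (g x)^2 -> derivable_pt_lim (fun z => f z / g z) x l.
Proof. intros H1 H2 H3 ->. replace ((g x)^2) with (Rsqr (g x)) by (unfold Rsqr; ring).
  apply (derivable_pt_lim_div f g x a b H1 H2 H3). Qed.
Lemma dl_id x l : l = 1 -> derivable_pt_lim (fun z => z) x l.
Proof. intros ->. apply derivable_pt_lim_id. Qed.

Lemma mono_base f a b : a <= b -> (forall z, a <= z <= b -> continuity_pt f z) ->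
  (forall z, a < z < b -> exists l, derivable_pt_lim f z l /\ 0 <= l) -> f a <= f b.
Proof.
  intros Hab Hc Hd. destruct (Req_dec a b) as [->|Hne]; [lra|].
  assert (Hlt : a < b) by lra.
  assert (pr1 : forall c, a < c < b -> derivable_pt f c).
  { intros c Hc'. destruct (constructive_indefinite_description _ (Hd c Hc')) as [l [Hl _]].
    exists l. exact Hl. }
  assert (pr2 : forall c, a < c < b -> derivable_pt id c).
  { intros c _. apply derivable_pt_id. }
  destruct (MVT f id a b pr1 pr2 Hlt Hc (fun c _ => derivable_continuous_pt _ _ (derivable_pt_id c)))
    as [c [P Heq]].
  rewrite (derive_pt_eq_0 id c 1 (pr2 c P) (derivable_pt_lim_id c)) in Heq. unfold id in Heq.
  assert (H0 : 0 <= derive_pt f c (pr1 c P)).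
  { destruct (Hd c P) as [l [Hl Hl0]].
    rewrite (derive_pt_eq_0 f c l (pr1 c P) Hl). exact Hl0. }
  nra.
Qed.

Lemma mono_fin (L : list R) : forall f a b, a <= b -> (forall z, a <= z <= b -> continuity_pt f z) ->
  (forall z, a < z < b -> ~ In z L -> exists l, derivable_pt_lim f z l /\ 0 <= l) -> f a <= f b.
Proof.
  induction L as [|p L IH]; intros f a b Hab Hc Hd.
  - apply mono_base; auto.
  - destruct (classic (a < p < b)) as [Hp|Hp].
    + apply Rle_trans with (f p).
      * apply IH; [lra| intros; apply Hc; lra |].
        intros z Hz Hn. apply Hd; [lra|]. intros [E|E]; [lra|tauto].
      * apply IH; [lra| intros; apply Hc; lra |].
        intros z Hz Hn. apply Hd; [lra|]. intros [E|E]; [lra|tauto].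
    + apply IH; auto. intros z Hz Hn. apply Hd; auto. intros [E|E]; [subst; tauto|tauto].
Qed.

Lemma lm_lp f l : lim_minf f l <-> lim_pinf (fun x => f (- x)) l.
Proof.
  split; intros H eps He; destruct (H eps He) as [M HM].
  - exists (- M). intros x Hx. apply HM. lra.
  - exists (- M). intros x Hx. replace x with (- - x) by ring. apply HM. lra.
Qed.

Lemma lp_ext f g l : (forall x, f x = g x) -> lim_pinf f l -> lim_pinf g l.
Proof. intros E H eps He. destruct (H eps He) as [M HM]. exists M. intros x Hx. rewrite <- E. auto. Qed.

Lemma lp_const c : lim_pinf (fun _ => c) c.
Proof. intros eps He. exists 0. intros. rewrite Rminus_diag, Rabs_R0. lra. Qed.

Lemma lp_add f g l m : lim_pinf f l -> lim_pinf g m -> lim_pinf (fun x => f x + g x) (l + m).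
Proof.
  intros H1 H2 eps He. destruct (H1 (eps/2)) as [M1 HM1]; [lra|].
  destruct (H2 (eps/2)) as [M2 HM2]; [lra|]. exists (Rmax M1 M2). intros x Hx.
  pose proof (HM1 x (Rle_lt_trans _ _ _ (Rmax_l M1 M2) Hx)).
  pose proof (HM2 x (Rle_lt_trans _ _ _ (Rmax_r M1 M2) Hx)).
  replace (f x + g x - (l + m)) with ((f x - l) + (g x - m)) by ring.
  eapply Rle_lt_trans; [apply Rabs_triang|]. lra.
Qed.

Lemma lp_opp f l : lim_pinf f l -> lim_pinf (fun x => - f x) (- l).
Proof.
  intros H eps He. destruct (H eps He) as [M HM]. exists M. intros x Hx.
  replace (- f x - - l) with (- (f x - l)) by ring. rewrite Rabs_Ropp. auto.
Qed.

Lemma lp_bound f l : lim_pinf f l -> exists M N, forall x, N < x -> Rabs (f x) <= M.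
Proof.
  intros H. destruct (H 1) as [N HN]; [lra|]. exists (Rabs l + 1), N. intros x Hx.
  pose proof (HN x Hx). pose proof (Rabs_triang_inv (f x) l). lra.
Qed.

Lemma lp_zmul f g : lim_pinf f 0 -> (exists M N, forall x, N < x -> Rabs (g x) <= M) ->
  lim_pinf (fun x => f x * g x) 0.
Proof.
  intros H [M [N HN]] eps He.
  destruct (H (eps / (Rabs M + 1))) as [M1 HM1].
  { apply Rdiv_lt_0_compat; [lra|]. pose proof (Rabs_pos M); lra. }
  exists (Rmax M1 N). intros x Hx.
  pose proof (HM1 x (Rle_lt_trans _ _ _ (Rmax_l M1 N) Hx)) as A.
  pose proof (HN x (Rle_lt_trans _ _ _ (Rmax_r M1 N) Hx)) as B.
  rewrite Rminus_0_r in *. rewrite Rabs_mult.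
  pose proof (Rabs_pos M). pose proof (Rle_abs M). pose proof (Rabs_pos (f x)). pose proof (Rabs_pos (g x)).
  apply Rle_lt_trans with (Rabs (f x) * (Rabs M + 1)).
  { apply Rmult_le_compat_l; lra. }
  apply Rmult_lt_reg_r with (/ (Rabs M + 1)). { apply Rinv_0_lt_compat; lra. }
  rewrite Rmult_assoc, Rinv_r by lra. rewrite Rmult_1_r. exact A.
Qed.

Lemma lp_0 f l : lim_pinf f l <-> lim_pinf (fun x => f x - l) 0.
Proof.
  split; intros H eps He; destruct (H eps He) as [M HM]; exists M; intros x Hx;
  specialize (HM x Hx); [rewrite Rminus_0_r | rewrite Rminus_0_r in HM]; auto.
Qed.

Lemma lp_mul f g l m : lim_pinf f l -> lim_pinf g m -> lim_pinf (fun x => f x * g x) (l * m).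
Proof.
  intros H1 H2. apply lp_0.
  apply lp_ext with (fun x => (f x - l) * g x + (g x - m) * l).
  { intros. ring. }
  replace 0 with (0 + 0) by ring. apply lp_add.
  - apply lp_zmul. apply (proj1 (lp_0 f l) H1). eapply lp_bound; eauto.
  - apply lp_zmul. apply (proj1 (lp_0 g m) H2). exists (Rabs l), 0. intros; lra.
Qed.

Lemma lp_comp f g l : lim_pinf f l -> continuity_pt g l -> lim_pinf (fun x => g (f x)) (g l).
Proof.
  intros H Hc eps He. destruct (Hc eps He) as [alp [Ha Hal]].
  destruct (H alp Ha) as [M HM]. exists M. intros x Hx.
  destruct (Req_dec (f x) l) as [E|E].
  - rewrite E, Rminus_diag, Rabs_R0. lra.
  - apply (Hal (f x)). split; [split; [exact I| auto]|]. apply HM; auto.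
Qed.

Lemma lp_le f g l m x0 : lim_minf f l -> lim_pinf g m ->
  (forall x y, x <= x0 -> x0 <= y -> f x <= g y) -> l <= m.
Proof.
  intros H1 H2 Hle. destruct (Rle_dec l m) as [|Hn]; auto. exfalso.
  destruct (H1 ((l - m)/2)) as [M1 HM1]; [lra|].
  destruct (H2 ((l - m)/2)) as [M2 HM2]; [lra|].
  set (x := Rmin (M1 - 1) x0). set (y := Rmax (M2 + 1) x0).
  assert (x <= x0) by (unfold x; apply Rmin_r).
  assert (x0 <= y) by (unfold y; apply Rmax_r).
  assert (x < M1) by (unfold x; pose proof (Rmin_l (M1 - 1) x0); lra).
  assert (M2 < y) by (unfold y; pose proof (Rmax_l (M2 + 1) x0); lra).
  specialize (HM1 x ltac:(auto)). specialize (HM2 y ltac:(auto)). specialize (Hle x y ltac:(auto) ltac:(auto)).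
  apply Rabs_def2 in HM1. apply Rabs_def2 in HM2. lra.
Qed.

Lemma dl_opp f x a l : derivable_pt_lim f x a -> l = - a -> derivable_pt_lim (fun z => - f z) x l.
Proof. intros H ->. apply (derivable_pt_lim_opp f x a H). Qed.

Lemma cp_plus f g x : continuity_pt f x -> continuity_pt g x -> continuity_pt (fun z => f z + g z) x.
Proof. intros; apply (continuity_pt_plus f g x); auto. Qed.
Lemma cp_minus f g x : continuity_pt f x -> continuity_pt g x -> continuity_pt (fun z => f z - g z) x.
Proof. intros; apply (continuity_pt_minus f g x); auto. Qed.
Lemma cp_mult f g x : continuity_pt f x -> continuity_pt g x -> continuity_pt (fun z => f z * g z) x.
Proof. intros; apply (continuity_pt_mult f g x); auto. Qed.
Lemma cp_div f g x : continuity_pt f x -> continuity_pt g x -> g x <> 0 -> continuity_pt (fun z => f z / g z) x.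
Proof. intros; apply (continuity_pt_div f g x); auto. Qed.
Lemma cp_comp f g x : continuity_pt g x -> continuity_pt f (g x) -> continuity_pt (fun z => f (g z)) x.
Proof. intros; apply (continuity_pt_comp g f x); auto. Qed.
Lemma cp_const c x : continuity_pt (fun _ => c) x.
Proof. apply continuity_pt_const. intros a b; reflexivity. Qed.
Lemma cp_d f x l : derivable_pt_lim f x l -> continuity_pt f x.
Proof. intros H. apply derivable_continuous_pt. exists l. exact H. Qed.

Lemma dl_sq f x a l : derivable_pt_lim f x a -> l = 2 * f x * a -> derivable_pt_lim (fun z => f z ^ 2) x l.
Proof.
  intros H ->. apply (dl_comp (fun y => y ^ 2) f x a (INR 2 * f x ^ (pred 2))); [exact H| apply (derivable_pt_lim_pow (f x) 2)|].
  simpl. ring.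
Qed.

Lemma cp_sq f x : continuity_pt f x -> continuity_pt (fun z => f z ^ 2) x.
Proof. intros H. apply (cp_comp (fun y => y ^ 2) f x H). eapply cp_d. apply derivable_pt_lim_pow. Qed.

Lemma deriv_to0 (w dw ddw : R -> R) : (forall x, derivable_pt_lim w x (dw x)) ->
  (forall x, derivable_pt_lim dw x (ddw x)) -> lim_pinf w 0 -> lim_pinf ddw 0 -> lim_pinf dw 0.
Proof.
  intros Hw Hdw H1 H2 eps He.
  destruct (H1 (eps/4)) as [M1 HM1]; [lra|].
  destruct (H2 (eps/2)) as [M2 HM2]; [lra|].
  exists (Rmax M1 M2). intros x Hx.
  assert (x > M1) by (pose proof (Rmax_l M1 M2); lra).
  assert (x > M2) by (pose proof (Rmax_r M1 M2); lra).
  destruct (MVT_cor2 w dw x (x+1) ltac:(lra) (fun c _ => Hw c)) as [c [Hc1 Hc2]].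
  destruct (MVT_cor2 dw ddw x c ltac:(lra) (fun c _ => Hdw c)) as [c' [Hc1' Hc2']].
  pose proof (HM1 x ltac:(lra)). pose proof (HM1 (x+1) ltac:(lra)).
  pose proof (HM2 c' ltac:(lra)).
  rewrite Rminus_0_r in *.
  replace (x + 1 - x) with 1 in Hc1 by ring. rewrite Rmult_1_r in Hc1.
  assert (Rabs (dw c) < eps/2).
  { rewrite <- Hc1. eapply Rle_lt_trans; [apply Rabs_triang|]. rewrite Rabs_Ropp. lra. }
  assert (Rabs (dw c - dw x) <= eps/2).
  { rewrite Hc1', Rabs_mult. rewrite (Rabs_right (c - x)) by lra.
    apply Rle_trans with (eps/2 * 1); [|lra]. apply Rmult_le_compat; try lra; apply Rabs_pos. }
  replace (dw x) with (dw c - (dw c - dw x)) by ring.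
  eapply Rle_lt_trans; [apply Rabs_triang|]. rewrite Rabs_Ropp.
  assert (Rabs (dw c - dw x) < eps/2 \/ Rabs (dw c - dw x) = eps/2) by lra.
  lra.
Qed.

Definition qf (a b k x : R) := a * cos (k * x) + b * sin (k * x).
Definition dqf (a b k x : R) := k * (- a * sin (k * x) + b * cos (k * x)).

Lemma qf_d a b k x : derivable_pt_lim (qf a b k) x (dqf a b k x).
Proof.
  unfold qf, dqf. eapply dl_plus.
  - eapply dl_mult. apply dl_const; reflexivity.
    eapply dl_comp. eapply dl_mult. apply dl_const; reflexivity. apply dl_id; reflexivity. reflexivity.
    apply derivable_pt_lim_cos. reflexivity. reflexivity.
  - eapply dl_mult. apply dl_const; reflexivity.
    eapply dl_comp. eapply dl_mult. apply dl_const; reflexivity. apply dl_id; reflexivity. reflexivity.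
    apply derivable_pt_lim_sin. reflexivity. reflexivity.
  - ring.
Qed.

Lemma dqf_d a b k x : derivable_pt_lim (dqf a b k) x (- k^2 * qf a b k x).
Proof.
  unfold qf, dqf. eapply dl_mult. apply dl_const; reflexivity.
  eapply dl_plus.
  - eapply dl_mult. apply dl_const; reflexivity.
    eapply dl_comp. eapply dl_mult. apply dl_const; reflexivity. apply dl_id; reflexivity. reflexivity.
    apply derivable_pt_lim_sin. reflexivity. reflexivity.
  - eapply dl_mult. apply dl_const; reflexivity.
    eapply dl_comp. eapply dl_mult. apply dl_const; reflexivity. apply dl_id; reflexivity. reflexivity.
    apply derivable_pt_lim_cos. reflexivity. reflexivity.
  - reflexivity.
  - ring.
Qed.

Lemma qf_bound a b k : exists M N, forall x, N < x -> Rabs (qf a b k x) <= M.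
Proof.
  exists (Rabs a + Rabs b), 0. intros x _. unfold qf.
  eapply Rle_trans; [apply Rabs_triang|]. rewrite !Rabs_mult.
  pose proof (COS_bound (k*x)). pose proof (SIN_bound (k*x)).
  assert (Rabs (cos (k*x)) <= 1) by (apply Rabs_le; lra).
  assert (Rabs (sin (k*x)) <= 1) by (apply Rabs_le; lra).
  pose proof (Rabs_pos a); pose proof (Rabs_pos b).
  pose proof (Rabs_pos (cos (k*x))); pose proof (Rabs_pos (sin (k*x))). nra.
Qed.

Lemma asym_p v dv k2f k a b : (forall x, derivable_pt_lim v x (dv x)) ->
  (forall x, derivable_pt_lim dv x (- k2f x * v x)) -> lim_pinf k2f (k^2) ->
  lim_pinf (fun x => v x - qf a b k x) 0 -> lim_pinf (fun x => dv x - dqf a b k x) 0.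
Proof.
  intros Hv Hdv Hk Hq.
  apply deriv_to0 with (w := fun x => v x - qf a b k x)
                       (ddw := fun x => - k2f x * (v x - qf a b k x) - (k2f x - k^2) * qf a b k x); auto.
  - intros x. eapply dl_minus; [apply Hv | apply qf_d | reflexivity].
  - intros x. eapply dl_minus; [apply Hdv | apply dqf_d | ring].
  - apply lp_ext with (fun x => (- k2f x) * (v x - qf a b k x) + - ((k2f x - k^2) * qf a b k x)).
    { intros; ring. }
    replace 0 with (- (k^2) * 0 + - 0) by ring.
    apply lp_add.
    + apply lp_mul; auto. apply lp_opp; auto.
    + apply lp_opp.
      apply lp_zmul. apply (proj1 (lp_0 _ _) Hk). apply qf_bound.
Qed.

Lemma asym_m v dv k2f k a b : (forall x, derivable_pt_lim v x (dv x)) ->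
  (forall x, derivable_pt_lim dv x (- k2f x * v x)) -> lim_minf k2f (k^2) ->
  lim_minf (fun x => v x - qf a b k x) 0 -> lim_minf (fun x => dv x - dqf a b k x) 0.
Proof.
  intros Hv Hdv Hk Hq. apply lm_lp. apply lm_lp in Hk. apply lm_lp in Hq.
  assert (H := asym_p (fun x => v (- x)) (fun x => - dv (- x)) (fun x => k2f (- x)) k a (- b)).
  replace 0 with (- 0) by ring.
  apply lp_ext with (fun x => - (- dv (- x) - dqf a (- b) k x)).
  { intros x. unfold dqf. replace (k * - x) with (- (k * x)) by ring. rewrite !sin_neg, !cos_neg. ring. }
  apply lp_opp. apply H; auto.
  - intros x. eapply dl_comp; [eapply dl_opp; [apply dl_id; reflexivity| reflexivity] | apply Hv | ring].
  - intros x. eapply dl_opp. eapply dl_comp; [eapply dl_opp; [apply dl_id; reflexivity| reflexivity] | apply Hdv | reflexivity].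
    ring.
  - apply lp_ext with (fun x => v (- x) - qf a b k (- x)); auto.
    intros x. unfold qf. replace (k * - x) with (- (k * x)) by ring. rewrite !sin_neg, !cos_neg. ring.
Qed.

Definition Sf (ur ui dur dui : R -> R) (hv x : R) :=
  (dur x ^ 2 + dui x ^ 2) / hv + hv * (ur x ^ 2 + ui x ^ 2).
Definition Yf (ur ui dur dui : R -> R) (J eps hv x : R) :=
  Sf ur ui dur dui hv x + sqrt (Sf ur ui dur dui hv x ^ 2 - 4 * J ^ 2 + eps).

Lemma Sf_id ur ui dur dui hv x : 0 < hv ->
  Sf ur ui dur dui hv x ^ 2 - 4 * (ur x * dui x - ui x * dur x) ^ 2 =
  (2 * (ur x * dur x + ui x * dui x)) ^ 2 +
  (hv * (ur x ^ 2 + ui x ^ 2) - (dur x ^ 2 + dui x ^ 2) / hv) ^ 2.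
Proof. intros. unfold Sf. field. lra. Qed.

Lemma Sf_nn ur ui dur dui hv x : 0 < hv -> 0 <= Sf ur ui dur dui hv x.
Proof.
  intros. unfold Sf. apply Rplus_le_le_0_compat.
  - unfold Rdiv. apply Rmult_le_pos; [nra | apply Rlt_le, Rinv_0_lt_compat; lra].
  - apply Rmult_le_pos; nra.
Qed.

Lemma dS (ur ui dur dui k2 hh : R -> R) x hd :
  derivable_pt_lim ur x (dur x) -> derivable_pt_lim dur x (- k2 x * ur x) ->
  derivable_pt_lim ui x (dui x) -> derivable_pt_lim dui x (- k2 x * ui x) ->
  derivable_pt_lim hh x hd -> hh x <> 0 ->
  derivable_pt_lim (fun z => Sf ur ui dur dui (hh z) z) x
    (2 * (ur x * dur x + ui x * dui x) * (hh x - k2 x / hh x) +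
     hd / hh x * (hh x * (ur x ^ 2 + ui x ^ 2) - (dur x ^ 2 + dui x ^ 2) / hh x)).
Proof.
  intros H1 H2 H3 H4 H5 H6. unfold Sf.
  eapply dl_plus.
  - eapply dl_div; [ eapply dl_plus; [eapply dl_sq; [exact H2|reflexivity] | eapply dl_sq; [exact H4|reflexivity] | reflexivity]
                   | exact H5 | exact H6 | reflexivity].
  - eapply dl_mult; [ exact H5 | eapply dl_plus; [eapply dl_sq; [exact H1|reflexivity] | eapply dl_sq; [exact H3|reflexivity] | reflexivity] | reflexivity].
  - field. exact H6.
Qed.

Lemma cS (ur ui dur dui k2 hh : R -> R) x :
  derivable_pt_lim ur x (dur x) -> derivable_pt_lim dur x (- k2 x * ur x) ->
  derivable_pt_lim ui x (dui x) -> derivable_pt_lim dui x (- k2 x * ui x) ->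
  continuity_pt hh x -> hh x <> 0 ->
  continuity_pt (fun z => Sf ur ui dur dui (hh z) z) x.
Proof.
  intros H1 H2 H3 H4 H5 H6. unfold Sf. apply cp_plus.
  - apply cp_div; auto. eapply cp_d.
    eapply dl_plus; [eapply dl_sq; [exact H2|reflexivity] | eapply dl_sq; [exact H4|reflexivity] | reflexivity].
  - apply cp_mult; auto. eapply cp_d.
    eapply dl_plus; [eapply dl_sq; [exact H1|reflexivity] | eapply dl_sq; [exact H3|reflexivity] | reflexivity].
Qed.

Lemma key_ineq S R X Z J eps hv kz q hd s E :
  0 < hv -> 0 < eps -> R = sqrt (S ^ 2 - 4 * J ^ 2 + eps) -> S ^ 2 - 4 * J ^ 2 = X ^ 2 + Z ^ 2 ->
  Rabs (hv ^ 2 - kz) <= 2 * hv * q -> 0 <= s * hd -> (s = 1 \/ s = -1) -> 0 <= S -> 0 < E ->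
  let S' := X * (hv - kz / hv) + hd / hv * Z in
  0 <= (S' + / (2 * R) * (2 * S * S')) * E + (S + R) * (E * (s * (/ hv * hd) + 2 * q)).
Proof.
  intros Hh He HR HSZ Hk Hsd Hs HS HE S'.
  assert (HR2 : R ^ 2 = X ^ 2 + Z ^ 2 + eps).
  { rewrite HR. rewrite <- HSZ. rewrite pow2_sqrt; [ring|].
    rewrite HSZ. nra. }
  assert (HRp : 0 < R). { rewrite HR. apply sqrt_lt_R0. rewrite HSZ. nra. }
  assert (HX : Rabs X <= R). { apply Rabs_le; split; nra. }
  assert (HZ : Rabs Z <= R). { apply Rabs_le; split; nra. }
  assert (Hq : 0 <= q). { pose proof (Rabs_pos (hv ^ 2 - kz)). nra. }
  assert (Hb : Rabs (hd / hv) = s * (/ hv * hd)).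
  { unfold Rdiv. rewrite Rabs_mult, Rabs_inv, (Rabs_right hv) by lra.
    destruct Hs as [-> | ->].
    - rewrite Rabs_right by nra. ring.
    - rewrite Rabs_left1 by nra. ring. }
  assert (Ha : Rabs (hv - kz / hv) <= 2 * q).
  { replace (hv - kz / hv) with ((hv ^ 2 - kz) / hv) by (field; lra).
    unfold Rdiv. rewrite Rabs_mult, Rabs_inv, (Rabs_right hv) by lra.
    apply Rmult_le_reg_r with hv; auto. rewrite Rmult_assoc, Rinv_l by lra. lra. }
  assert (HS' : Rabs S' <= R * (s * (/ hv * hd) + 2 * q)).
  { unfold S'. eapply Rle_trans; [apply Rabs_triang|]. rewrite !Rabs_mult, Hb.
    pose proof (Rabs_pos X). pose proof (Rabs_pos Z). pose proof (Rabs_pos (hv - kz / hv)).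
    assert (0 <= s * (/ hv * hd)) by (rewrite <- Hb; apply Rabs_pos).
    nra. }
  replace ((S' + / (2 * R) * (2 * S * S')) * E + (S + R) * (E * (s * (/ hv * hd) + 2 * q)))
    with ((S + R) * E / R * (S' + R * (s * (/ hv * hd) + 2 * q))) by (field; lra).
  apply Rmult_le_pos.
  - apply Rmult_le_pos; [apply Rmult_le_pos; lra | apply Rlt_le, Rinv_0_lt_compat; lra].
  - pose proof (Rle_abs (- S')). rewrite Rabs_Ropp in H. lra.
Qed.

Lemma core (ur ui dur dui k2 sq hh dh : R -> R) (J eps s a b : R) (pts : list R)
  (pr : Riemann_integrable sq a b) :
  (forall x, derivable_pt_lim ur x (dur x)) -> (forall x, derivable_pt_lim dur x (- k2 x * ur x)) ->
  (forall x, derivable_pt_lim ui x (dui x)) -> (forall x, derivable_pt_lim dui x (- k2 x * ui x)) ->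
  (forall x, ur x * dui x - ui x * dur x = J) -> 0 < eps -> a <= b -> (s = 1 \/ s = -1) ->
  (forall z, a <= z <= b -> continuity_pt hh z /\ 0 < hh z /\ continuity_pt sq z) ->
  (forall z, a < z < b -> ~ In z pts -> derivable_pt_lim hh z (dh z) /\ 0 <= s * dh z) ->
  (forall z, a <= z <= b -> Rabs (hh z ^ 2 - k2 z) <= 2 * hh z * sq z) ->
  Yf ur ui dur dui J eps (hh a) a * exp (s * ln (hh a)) <=
  Yf ur ui dur dui J eps (hh b) b * exp (s * ln (hh b)) * exp (2 * RiemannInt pr).
Proof.
  intros Hur Hdur Hui Hdui HJ Heps Hab Hs Hreg Hdh Hk.
  assert (C0 : forall z, a <= z <= b -> continuity_pt sq z) by (intros; apply Hreg; auto).
  set (P := primitive Hab (FTC_P1 Hab C0)).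
  assert (HP : forall z, a <= z <= b -> derivable_pt_lim P z (sq z)).
  { intros z Hz. apply RiemannInt_P28. auto. }
  assert (HI : RiemannInt pr = P b - P a) by apply RiemannInt_P20.
  set (Psi := fun z => Yf ur ui dur dui J eps (hh z) z * exp (s * ln (hh z) + 2 * P z)).
  assert (Hpos : forall z, a <= z <= b -> 0 < Sf ur ui dur dui (hh z) z ^ 2 - 4 * J ^ 2 + eps).
  { intros z Hz. destruct (Hreg z Hz) as [_ [Hh _]]. rewrite <- (HJ z). rewrite Sf_id by exact Hh. match goal with |- 0 < ?A ^ 2 + ?B ^ 2 + _ => pose proof (pow2_ge_0 A); pose proof (pow2_ge_0 B); lra end. }
  assert (Hmono : Psi a <= Psi b).
  { apply (mono_fin pts).
    - exact Hab.
    - intros z Hz. destruct (Hreg z Hz) as [Hc [Hh _]].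
      assert (HcS := cS ur ui dur dui k2 hh z (Hur z) (Hdur z) (Hui z) (Hdui z) Hc ltac:(lra)).
      unfold Psi, Yf. apply cp_mult.
      + apply cp_plus; [exact HcS|]. apply cp_comp.
        * apply cp_plus; [apply cp_minus; [apply cp_sq; exact HcS | apply cp_const] | apply cp_const].
        * apply continuity_pt_sqrt. apply Rlt_le, Hpos; auto.
      + apply cp_comp.
        * apply cp_plus; apply cp_mult; try apply cp_const.
          -- apply cp_comp; auto. eapply cp_d. apply derivable_pt_lim_ln. lra.
          -- eapply cp_d. apply HP. auto.
        * eapply cp_d. apply derivable_pt_lim_exp.
    - intros z Hz Hn. destruct (Hdh z Hz Hn) as [Hd Hsd].
      destruct (Hreg z ltac:(lra)) as [_ [Hh _]].
      assert (HdS := dS ur ui dur dui k2 hh z (dh z) (Hur z) (Hdur z) (Hui z) (Hdui z) Hd ltac:(lra)).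
      eexists; split.
      + unfold Psi, Yf. eapply dl_mult.
        * eapply dl_plus. exact HdS. eapply dl_comp.
          eapply dl_plus. eapply dl_minus. eapply dl_sq. exact HdS. reflexivity.
          apply dl_const. reflexivity. reflexivity. apply dl_const; reflexivity. reflexivity.
          apply derivable_pt_lim_sqrt. apply Hpos; lra. reflexivity. reflexivity.
        * eapply dl_comp. eapply dl_plus. eapply dl_mult. apply dl_const; reflexivity.
          eapply dl_comp. exact Hd. apply derivable_pt_lim_ln. lra. reflexivity. reflexivity.
          eapply dl_mult. apply dl_const; reflexivity. apply HP. lra. reflexivity. reflexivity.
          apply derivable_pt_lim_exp. reflexivity.
        * reflexivity.
      + eapply Rle_trans; [apply (key_ineq (Sf ur ui dur dui (hh z) z) (sqrt (Sf ur ui dur dui (hh z) z ^ 2 - 4 * J ^ 2 + eps))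
           (2 * (ur z * dur z + ui z * dui z)) (hh z * (ur z ^ 2 + ui z ^ 2) - (dur z ^ 2 + dui z ^ 2) / hh z)
           J eps (hh z) (k2 z) (sq z) (dh z) s (exp (s * ln (hh z) + 2 * P z))) | right; ring].
        * exact Hh.
        * exact Heps.
        * reflexivity.
        * rewrite <- (HJ z). apply Sf_id; exact Hh.
        * apply Hk; lra.
        * exact Hsd.
        * exact Hs.
        * apply Sf_nn; exact Hh.
        * apply exp_pos. }
  unfold Psi in Hmono. rewrite !exp_plus in Hmono.
  rewrite HI. replace (2 * (P b - P a)) with (2 * P b + - (2 * P a)) by ring.
  rewrite exp_plus, exp_Ropp.
  pose proof (exp_pos (2 * P a)). pose proof (exp_pos (2 * P b)).
  apply Rmult_le_reg_r with (exp (2 * P a)); auto.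
  replace (Yf ur ui dur dui J eps (hh b) b * exp (s * ln (hh b)) * (exp (2 * P b) * / exp (2 * P a)) * exp (2 * P a))
    with (Yf ur ui dur dui J eps (hh b) b * (exp (s * ln (hh b)) * exp (2 * P b))) by (field; lra).
  lra.
Qed.

Definition Bnd (f : R -> R) := exists M N, forall x, N < x -> Rabs (f x) <= M.

Lemma Bnd_add f g : Bnd f -> Bnd g -> Bnd (fun x => f x + g x).
Proof.
  intros [M1 [N1 H1]] [M2 [N2 H2]]. exists (M1 + M2), (Rmax N1 N2). intros x Hx.
  pose proof (H1 x (Rle_lt_trans _ _ _ (Rmax_l _ _) Hx)).
  pose proof (H2 x (Rle_lt_trans _ _ _ (Rmax_r _ _) Hx)).
  eapply Rle_trans; [apply Rabs_triang|]. lra.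
Qed.

Lemma Bnd_mul f g : Bnd f -> Bnd g -> Bnd (fun x => f x * g x).
Proof.
  intros [M1 [N1 H1]] [M2 [N2 H2]]. exists (M1 * M2), (Rmax N1 N2). intros x Hx.
  pose proof (H1 x (Rle_lt_trans _ _ _ (Rmax_l _ _) Hx)).
  pose proof (H2 x (Rle_lt_trans _ _ _ (Rmax_r _ _) Hx)).
  rewrite Rabs_mult. apply Rmult_le_compat; auto; apply Rabs_pos.
Qed.

Lemma Bnd_lim f l : lim_pinf f l -> Bnd f.
Proof. apply lp_bound. Qed.

Lemma Bnd_close f g : lim_pinf (fun x => f x - g x) 0 -> Bnd g -> Bnd f.
Proof.
  intros H Hg. apply Bnd_lim in H.
  destruct (Bnd_add _ _ H Hg) as [M [N HM]]. exists M, N. intros x Hx.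
  specialize (HM x Hx). replace (f x - g x + g x) with (f x) in HM by ring. auto.
Qed.

Lemma Bnd_qf a b k : Bnd (qf a b k).
Proof. apply qf_bound. Qed.

Lemma Bnd_dqf a b k : Bnd (dqf a b k).
Proof.
  exists (Rabs k * (Rabs a + Rabs b)), 0. intros x _. unfold dqf.
  rewrite Rabs_mult. apply Rmult_le_compat_l; [apply Rabs_pos|].
  eapply Rle_trans; [apply Rabs_triang|]. rewrite !Rabs_mult, Rabs_Ropp.
  pose proof (COS_bound (k*x)). pose proof (SIN_bound (k*x)).
  assert (Rabs (cos (k*x)) <= 1) by (apply Rabs_le; lra).
  assert (Rabs (sin (k*x)) <= 1) by (apply Rabs_le; lra).
  pose proof (Rabs_pos a); pose proof (Rabs_pos b).
  pose proof (Rabs_pos (cos (k*x))); pose proof (Rabs_pos (sin (k*x))). nra.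
Qed.

Lemma lp_add0 f g : lim_pinf f 0 -> lim_pinf g 0 -> lim_pinf (fun x => f x + g x) 0.
Proof. intros. replace 0 with (0 + 0) by ring. apply lp_add; auto. Qed.

Lemma lp_zmul' f g : lim_pinf f 0 -> Bnd g -> lim_pinf (fun x => g x * f x) 0.
Proof. intros. apply lp_ext with (fun x => f x * g x); [intros; ring|]. apply lp_zmul; auto. Qed.

Lemma LJ ur ui dur dui qa qb dqa dqb :
  Bnd qa -> Bnd qb -> Bnd dqa -> Bnd dqb ->
  lim_pinf (fun x => ur x - qa x) 0 -> lim_pinf (fun x => ui x - qb x) 0 ->
  lim_pinf (fun x => dur x - dqa x) 0 -> lim_pinf (fun x => dui x - dqb x) 0 ->
  lim_pinf (fun x => ur x * dui x - ui x * dur x - (qa x * dqb x - qb x * dqa x)) 0.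
Proof.
  intros Ba Bb Bda Bdb H1 H2 H3 H4.
  assert (Bdui : Bnd dui) by (eapply Bnd_close; eauto).
  assert (Bdur : Bnd dur) by (eapply Bnd_close; eauto).
  apply lp_ext with (fun x => ((ur x - qa x) * dui x + qa x * (dui x - dqb x)) +
     (- ((ui x - qb x) * dur x) + - (qb x * (dur x - dqa x)))).
  { intros; ring. }
  apply lp_add0; apply lp_add0.
  - apply lp_zmul; auto.
  - apply lp_zmul'; auto.
  - replace 0 with (-0) by ring. apply lp_opp. apply lp_zmul; auto.
  - replace 0 with (-0) by ring. apply lp_opp. apply lp_zmul'; auto.
Qed.

Lemma lp_sqdiff f g : Bnd g -> lim_pinf (fun x => f x - g x) 0 -> lim_pinf (fun x => f x ^ 2 - g x ^ 2) 0.
Proof.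
  intros Bg H. assert (Bf : Bnd f) by (eapply Bnd_close; eauto).
  apply lp_ext with (fun x => (f x - g x) * (f x + g x)); [intros; ring|].
  apply lp_zmul; auto. apply Bnd_add; auto.
Qed.

Lemma LS ur ui dur dui qa qb dqa dqb h k :
  Bnd qa -> Bnd qb -> Bnd dqa -> Bnd dqb ->
  lim_pinf (fun x => ur x - qa x) 0 -> lim_pinf (fun x => ui x - qb x) 0 ->
  lim_pinf (fun x => dur x - dqa x) 0 -> lim_pinf (fun x => dui x - dqb x) 0 ->
  lim_pinf h k -> 0 < k ->
  lim_pinf (fun x => Sf ur ui dur dui (h x) x -
     ((dqa x ^ 2 + dqb x ^ 2) / k + k * (qa x ^ 2 + qb x ^ 2))) 0.
Proof.
  intros Ba Bb Bda Bdb H1 H2 H3 H4 Hh Hk.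
  assert (Hinv : lim_pinf (fun x => 1 / h x) (1 / k)).
  { apply (lp_comp h (fun y => 1 / y)); auto. apply cp_div; [apply cp_const| eapply cp_d; apply dl_id; reflexivity| lra]. }
  assert (Hev : exists N, forall x, N < x -> 0 < h x).
  { destruct (Hh (k/2)) as [N HN]; [lra|]. exists N. intros x Hx. specialize (HN x Hx).
    apply Rabs_def2 in HN. lra. }
  destruct Hev as [N0 HN0].
  assert (EU : lim_pinf (fun x => (dur x ^ 2 + dui x ^ 2) - (dqa x ^ 2 + dqb x ^ 2)) 0).
  { apply lp_ext with (fun x => (dur x ^ 2 - dqa x ^ 2) + (dui x ^ 2 - dqb x ^ 2)); [intros; ring|].
    apply lp_add0; apply lp_sqdiff; auto. }
  assert (EV : lim_pinf (fun x => (ur x ^ 2 + ui x ^ 2) - (qa x ^ 2 + qb x ^ 2)) 0).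
  { apply lp_ext with (fun x => (ur x ^ 2 - qa x ^ 2) + (ui x ^ 2 - qb x ^ 2)); [intros; ring|].
    apply lp_add0; apply lp_sqdiff; auto. }
  assert (BU0 : Bnd (fun x => dqa x ^ 2 + dqb x ^ 2)).
  { apply Bnd_add; apply Bnd_mul; auto; apply Bnd_mul; auto; exists 1, 0; intros; rewrite Rabs_R1; lra. }
  assert (BV0 : Bnd (fun x => qa x ^ 2 + qb x ^ 2)).
  { apply Bnd_add; apply Bnd_mul; auto; apply Bnd_mul; auto; exists 1, 0; intros; rewrite Rabs_R1; lra. }
  intros eps He.
  assert (L : lim_pinf (fun x =>
     ((dur x ^ 2 + dui x ^ 2) - (dqa x ^ 2 + dqb x ^ 2)) * (1 / h x) +
     (dqa x ^ 2 + dqb x ^ 2) * (1 / h x - 1 / k) +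
     (h x * ((ur x ^ 2 + ui x ^ 2) - (qa x ^ 2 + qb x ^ 2)) +
     (h x - k) * (qa x ^ 2 + qb x ^ 2))) 0).
  { apply lp_add0; apply lp_add0.
    - apply lp_zmul; auto. eapply Bnd_lim; eauto.
    - apply lp_zmul'; auto. apply (proj1 (lp_0 _ _) Hinv).
    - apply lp_zmul'; auto. eapply Bnd_lim; eauto.
    - apply lp_zmul; auto. apply (proj1 (lp_0 _ _) Hh). }
  destruct (L eps He) as [M HM]. exists (Rmax M N0). intros x Hx.
  pose proof (HN0 x (Rle_lt_trans _ _ _ (Rmax_r _ _) Hx)).
  specialize (HM x (Rle_lt_trans _ _ _ (Rmax_l _ _) Hx)).
  replace (Sf ur ui dur dui (h x) x - ((dqa x ^ 2 + dqb x ^ 2) / k + k * (qa x ^ 2 + qb x ^ 2)) - 0)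
    with (((dur x ^ 2 + dui x ^ 2) - (dqa x ^ 2 + dqb x ^ 2)) * (1 / h x) +
     (dqa x ^ 2 + dqb x ^ 2) * (1 / h x - 1 / k) +
     (h x * ((ur x ^ 2 + ui x ^ 2) - (qa x ^ 2 + qb x ^ 2)) +
     (h x - k) * (qa x ^ 2 + qb x ^ 2)) - 0); auto.
  unfold Sf. field. lra.
Qed.

Lemma const_d0 f : (forall x, derivable_pt_lim f x 0) -> forall x y, f x = f y.
Proof.
  intros H x y. destruct (Rtotal_order x y) as [Hl|[E|Hl]].
  - destruct (MVT_cor2 f (fun _ => 0) x y Hl (fun c _ => H c)) as [c [Hc _]]. lra.
  - subst; auto.
  - destruct (MVT_cor2 f (fun _ => 0) y x Hl (fun c _ => H c)) as [c [Hc _]]. lra.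
Qed.

Lemma lp_const0 c : lim_pinf (fun _ => c) 0 -> c = 0.
Proof.
  intros H. destruct (Req_dec c 0) as [|Hn]; auto. exfalso.
  destruct (H (Rabs c)) as [M HM]. { apply Rabs_pos_lt; auto. }
  specialize (HM (M+1) ltac:(lra)). rewrite Rminus_0_r in HM. lra.
Qed.

Lemma sc1 x : sin x ^ 2 + cos x ^ 2 = 1.
Proof. pose proof (sin2_cos2 x). unfold Rsqr in H. simpl. lra. Qed.

Lemma qf_J a b c d k x :
  qf a b k x * dqf c d k x - qf c d k x * dqf a b k x = k * (a * d - b * c).
Proof.
  unfold qf, dqf. pose proof (sc1 (k*x)).
  set (s := sin (k*x)) in *. set (co := cos (k*x)) in *.
  replace (k * (a * d - b * c)) with (k * (a * d - b * c) * (s^2 + co^2)) by (rewrite H; ring). ring.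
Qed.

Lemma qf_S a b c d k x : k <> 0 ->
  (dqf a b k x ^ 2 + dqf c d k x ^ 2) / k + k * (qf a b k x ^ 2 + qf c d k x ^ 2) =
  k * (a^2 + b^2 + c^2 + d^2).
Proof.
  intros Hk. unfold qf, dqf. pose proof (sc1 (k*x)).
  set (s := sin (k*x)) in *. set (co := cos (k*x)) in *.
  replace (k * (a^2 + b^2 + c^2 + d^2)) with (k * (a^2 + b^2 + c^2 + d^2) * (s^2 + co^2)) by (rewrite H; ring).
  field. auto.
Qed.

Lemma dsign_up f z l : derivable_pt_lim f z l ->
  (exists del, 0 < del /\ forall t, 0 < t < del -> f z <= f (z + t)) -> 0 <= l.
Proof.
  intros H [del [Hd Hm]]. destruct (Rle_dec 0 l) as [|Hn]; auto. exfalso.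
  destruct (H (- l)) as [[dl Hdl] Hdd]; [lra|].
  set (t := Rmin (dl/2) (del/2)).
  assert (Ht : 0 < t) by (unfold t; apply Rmin_glb_lt; lra).
  assert (Ht1 : t < dl) by (unfold t; pose proof (Rmin_l (dl/2) (del/2)); simpl in *; lra).
  assert (Ht2 : t < del) by (unfold t; pose proof (Rmin_r (dl/2) (del/2)); lra).
  specialize (Hdd t ltac:(lra) ltac:(rewrite Rabs_right; simpl; lra)).
  specialize (Hm t ltac:(lra)).
  assert (0 <= (f (z + t) - f z) / t) by (unfold Rdiv; apply Rmult_le_pos; [lra| apply Rlt_le, Rinv_0_lt_compat; lra]).
  apply Rabs_def2 in Hdd. lra.
Qed.

Lemma dsign_down f z l : derivable_pt_lim f z l ->
  (exists del, 0 < del /\ forall t, 0 < t < del -> f (z + t) <= f z) -> l <= 0.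
Proof.
  intros H Hm. assert (0 <= - l); [|lra].
  apply (dsign_up (fun y => - f y) z). eapply dl_opp; [exact H| reflexivity].
  destruct Hm as [del [Hd Hm]]. exists del; split; auto. intros t Ht. specialize (Hm t Ht). lra.
Qed.

Lemma eps0 a b c : 0 <= c -> (forall eps, 0 < eps -> a <= b + c * sqrt eps) -> a <= b.
Proof.
  intros Hc H. destruct (Rle_dec a b) as [|Hn]; auto. exfalso.
  set (d := (a - b) / (c + 1)).
  assert (Hd : 0 < d) by (unfold d; apply Rdiv_lt_0_compat; lra).
  specialize (H (d ^ 2) ltac:(nra)). rewrite sqrt_pow2 in H by lra.
  assert (c * d < a - b).
  { unfold d. apply Rmult_lt_reg_r with (c + 1); [lra|].
    replace (c * ((a - b) / (c + 1)) * (c + 1)) with (c * (a - b)) by (field; lra). nra. }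
  lra.
Qed.



Lemma final_alg km r2 T B : 0 < km -> 0 <= r2 ->
  T = 1 - r2 ->
  2 * km * (1 + r2) + 4 * km * sqrt r2 <= 2 * km * T * exp (2 * B) ->
  T >= (sech B) ^ 2.
Proof.
  intros Hkm Hr HT H.
  set (r := sqrt r2). assert (Hr0 : 0 <= r) by apply sqrt_pos.
  assert (Hr2 : r2 = r ^ 2) by (unfold r; rewrite pow2_sqrt; auto).
  set (e := exp B). assert (He : 0 < e) by apply exp_pos.
  assert (HE : exp (2 * B) = e * e) by (unfold e; rewrite <- exp_plus; f_equal; ring).
  rewrite HE in H. fold r in H. clearbody r. subst r2.
  set (E := e * e) in *.
  assert (H1 : (1 + r) * (1 + r) <= (1 - r) * (1 + r) * E).
  { apply Rmult_le_reg_l with (2 * km); [lra|]. rewrite HT in H.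
    replace (2 * km * ((1 + r) * (1 + r))) with (2 * km * (1 + r ^ 2) + 4 * km * r) by ring.
    replace (2 * km * ((1 - r) * (1 + r) * E)) with (2 * km * (1 - r ^ 2) * E) by ring. lra. }
  assert (H2 : 1 + r <= (1 - r) * E).
  { apply Rmult_le_reg_r with (1 + r); [lra|]. nra. }
  assert (HEp : 0 < E) by (unfold E; nra).
  assert (Hr1 : r < 1).
  { destruct (Rlt_le_dec r 1); auto. assert ((1 - r) * E <= 0) by nra. lra. }
  set (d := (1 - r) * E - (1 + r)).
  assert (Hd : 0 <= d) by (unfold d; lra).
  assert (Hf : (1 - r) * ((1 - r ^ 2) * (E + 1) ^ 2 - 4 * E) = 4 * r * d + (1 + r) * d ^ 2).
  { unfold d. ring. }
  assert (Hf2 : 0 <= (1 - r ^ 2) * (E + 1) ^ 2 - 4 * E).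
  { assert (0 <= 4 * r * d + (1 + r) * d ^ 2) by nra.
    rewrite <- Hf in H0. apply Rmult_le_reg_l with (1 - r); [lra|]. lra. }
  unfold sech, cosh. fold e. rewrite exp_Ropp. fold e.
  apply Rle_ge. rewrite HT.
  replace ((/ ((e + / e) / 2)) ^ 2) with (4 * E / (E + 1) ^ 2) by (unfold E; field; nra).
  apply Rmult_le_reg_r with ((E + 1) ^ 2); [nra|].
  unfold Rdiv. rewrite Rmult_assoc, Rinv_l by nra. lra.
Qed.

Lemma cp_ext f g x : (forall z, f z = g z) -> continuity_pt f x -> continuity_pt g x.
Proof.
  intros E H eps He. destruct (H eps He) as [a [Ha Hb]]. exists a. split; auto.
  intros y Hy. simpl in *. rewrite <- !E. apply Hb; auto.
Qed.

Lemma cp_sqmax (k2 : R -> R) D x : continuity k2 ->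
  continuity_pt (fun z => sqrt (Rmax 0 (D - k2 z))) x.
Proof.
  intros Hc. apply cp_comp.
  - apply cp_ext with (fun z => ((D - k2 z) + Rabs (D - k2 z)) / 2).
    { intros z. unfold Rmax. destruct (Rle_dec 0 (D - k2 z)).
      - rewrite Rabs_right by lra. field.
      - rewrite Rabs_left by lra. field. }
    apply cp_div; [| apply cp_const | lra].
    apply cp_plus.
    + apply cp_minus; [apply cp_const| apply Hc].
    + apply cp_comp; [apply cp_minus; [apply cp_const| apply Hc] | apply Rcontinuity_abs].
  - apply continuity_pt_sqrt. apply Rmax_l.
Qed.

Lemma Bnd_qfn a b k : Bnd (fun x => qf a b k (- x)).
Proof.
  exists (Rabs a + Rabs b), 0. intros x _. unfold qf.
  eapply Rle_trans; [apply Rabs_triang|]. rewrite !Rabs_mult.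
  pose proof (COS_bound (k*-x)). pose proof (SIN_bound (k*-x)).
  assert (Rabs (cos (k*-x)) <= 1) by (apply Rabs_le; lra).
  assert (Rabs (sin (k*-x)) <= 1) by (apply Rabs_le; lra).
  pose proof (Rabs_pos a); pose proof (Rabs_pos b).
  pose proof (Rabs_pos (cos (k*-x))); pose proof (Rabs_pos (sin (k*-x))). nra.
Qed.

Lemma Bnd_dqfn a b k : Bnd (fun x => dqf a b k (- x)).
Proof.
  exists (Rabs k * (Rabs a + Rabs b)), 0. intros x _. unfold dqf.
  rewrite Rabs_mult. apply Rmult_le_compat_l; [apply Rabs_pos|].
  eapply Rle_trans; [apply Rabs_triang|]. rewrite !Rabs_mult, Rabs_Ropp.
  pose proof (COS_bound (k*-x)). pose proof (SIN_bound (k*-x)).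
  assert (Rabs (cos (k*-x)) <= 1) by (apply Rabs_le; lra).
  assert (Rabs (sin (k*-x)) <= 1) by (apply Rabs_le; lra).
  pose proof (Rabs_pos a); pose proof (Rabs_pos b).
  pose proof (Rabs_pos (cos (k*-x))); pose proof (Rabs_pos (sin (k*-x))). nra.
Qed.

Lemma cont_hfun D t : continuity_pt (fun t => sqrt (D ^ 2 + Rabs (t - D ^ 2))) t.
Proof.
  apply cp_comp.
  - apply cp_plus; [apply cp_const|]. apply cp_comp; [apply cp_minus; [eapply cp_d; apply dl_id; reflexivity| apply cp_const] | apply Rcontinuity_abs].
  - apply continuity_pt_sqrt. pose proof (Rabs_pos (t - D ^ 2)). pose proof (pow2_ge_0 D). lra.
Qed.

Lemma cont_F J eps t : 0 <= t ^ 2 - 4 * J ^ 2 + eps ->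
  continuity_pt (fun t => t + sqrt (t ^ 2 - 4 * J ^ 2 + eps)) t.
Proof.
  intros H. apply cp_plus; [eapply cp_d; apply dl_id; reflexivity|].
  apply cp_comp; [|apply continuity_pt_sqrt; auto].
  apply cp_plus; [apply cp_minus; [apply cp_sq; eapply cp_d; apply dl_id; reflexivity| apply cp_const]| apply cp_const].
Qed.

Theorem mainTheorem14
  (k2 : R -> R) (km kp : R) (x0 k2min Delta m I : R)
  (ur ui : R -> R) (rr ri tr ti : R)
  (Hkm : 0 < km) (Hkp : 0 < kp)
  (Hlimm : lim_minf k2 (km ^ 2)) (Hlimp : lim_pinf k2 (kp ^ 2))
  (Hintm : integrable_near_minf (fun x => k2 x - km ^ 2))
  (Hintp : integrable_near_pinf (fun x => k2 x - kp ^ 2))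
  (Hsol : scattering_solution k2 km kp ur ui rr ri tr ti)
  (Hcont : continuity k2) (HC1 : piecewise_C1 k2)
  (Hdec : forall x y, x <= y -> y <= x0 -> k2 y <= k2 x)
  (Hinc : forall x y, x0 <= x -> x <= y -> k2 x <= k2 y)
  (Hmin : (exists x, k2 x = k2min) /\ (forall x, k2min <= k2 x))
  (HDelta : 0 < Delta)
  (HD1 : k2min <= Delta ^ 2) (HD2 : Delta ^ 2 <= Rmin (kp ^ 2) (km ^ 2))
  (Hm : (exists x, m = sqrt (Rmax 0 (Delta ^ 2 - k2 x))) /\
        (forall x, sqrt (Rmax 0 (Delta ^ 2 - k2 x)) <= m))
  (HI : improper_integral_R (fun x => sqrt (Rmax 0 (Delta ^ 2 - k2 x))) I) :
  transmission km kp tr ti >=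
    (sech ((1 / 2) * ln (kp * km / Delta ^ 2) + m / Delta + I)) ^ 2.
Proof.
  destruct Hsol as [[dur [Hur Hdur]] [[dui [Hui Hdui]] [HLr [HLi [HRr HRi]]]]].
  destruct HC1 as [pts [d Hd]].
  set (B := (1 / 2) * ln (kp * km / Delta ^ 2) + m / Delta + I).
  set (J := ur 0 * dui 0 - ui 0 * dur 0).
  assert (HJ : forall x, ur x * dui x - ui x * dur x = J).
  { intros x. unfold J. apply (const_d0 (fun x => ur x * dui x - ui x * dur x)). intros z.
    eapply dl_minus; [eapply dl_mult; [apply Hur | apply Hdui | reflexivity] |
                      eapply dl_mult; [apply Hui | apply Hdur | reflexivity] | ring]. }
  assert (Hk0 : forall x, k2 x0 <= k2 x).
  { intros x. destruct (Rle_dec x x0). apply Hdec; lra. apply Hinc; lra. }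
  assert (Hk0D : k2 x0 <= Delta ^ 2).
  { destruct Hmin as [[x1 Hx1] _]. pose proof (Hk0 x1). lra. }
  assert (HDm : Delta ^ 2 <= km ^ 2) by (pose proof (Rmin_r (kp^2) (km^2)); lra).
  assert (HDp : Delta ^ 2 <= kp ^ 2) by (pose proof (Rmin_l (kp^2) (km^2)); lra).
  assert (HkL : forall x, x <= x0 -> k2 x <= km ^ 2).
  { intros x Hx. destruct (Rle_dec (k2 x) (km^2)) as [|Hn]; auto. exfalso.
    destruct (Hlimm (k2 x - km^2)) as [M HM]; [lra|].
    set (z := Rmin x (M - 1)). assert (z <= x) by apply Rmin_l.
    assert (z < M) by (unfold z; pose proof (Rmin_r x (M-1)); lra).
    specialize (HM z H0). pose proof (Hdec z x H ltac:(lra)).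
    apply Rabs_def2 in HM. lra. }
  assert (HkR : forall x, x0 <= x -> k2 x <= kp ^ 2).
  { intros x Hx. destruct (Rle_dec (k2 x) (kp^2)) as [|Hn]; auto. exfalso.
    destruct (Hlimp (k2 x - kp^2)) as [M HM]; [lra|].
    set (z := Rmax x (M + 1)). assert (x <= z) by apply Rmax_l.
    assert (M < z) by (unfold z; pose proof (Rmax_r x (M+1)); lra).
    specialize (HM z H0). pose proof (Hinc x z Hx H).
    apply Rabs_def2 in HM. lra. }
  set (h := fun x => sqrt (Delta ^ 2 + Rabs (k2 x - Delta ^ 2))).
  set (sq := fun x => sqrt (Rmax 0 (Delta ^ 2 - k2 x))).
  assert (Hhge : forall x, Delta <= h x).
  { intros x. unfold h. rewrite <- (sqrt_pow2 Delta) at 1 by lra.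
    apply sqrt_le_1_alt. pose proof (Rabs_pos (k2 x - Delta ^ 2)). lra. }
  assert (Hsq0 : forall x, 0 <= sq x) by (intros; apply sqrt_pos).
  assert (Hint : forall a b, a <= b -> Riemann_integrable sq a b).
  { intros a b Hab. destruct HI as [HI1 _]. destruct (constructive_indefinite_description _ (HI1 a b Hab)) as [pr _].
    exact pr. }
  set (Int := fun a b => match Rle_dec a b with left H => RiemannInt (Hint a b H) | right _ => 0 end).
  assert (HIntE : forall a b (pr : Riemann_integrable sq a b), a <= b -> Int a b = RiemannInt pr).
  { intros a b pr Hab. unfold Int. destruct (Rle_dec a b); [apply RiemannInt_P5| lra]. }
  assert (HChas : forall a b c, a <= b -> b <= c -> Int a b + Int b c = Int a c).
  { intros a b c H1 H2. rewrite (HIntE a b (Hint a b H1) H1), (HIntE b c (Hint b c H2) H2),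
      (HIntE a c (Hint a c ltac:(lra)) ltac:(lra)). apply RiemannInt_P26. }
  assert (HInt0 : forall a b, a <= b -> 0 <= Int a b).
  { intros a b Hab. rewrite (HIntE a b (Hint a b Hab) Hab).
    pose proof (RiemannInt_P15 (RiemannInt_P14 a b 0)) as E.
    pose proof (RiemannInt_P19 (RiemannInt_P14 a b 0) (Hint a b Hab) Hab) as L.
    assert (0 * (b - a) = 0) by ring. assert (HH : forall x, a < x < b -> fct_cte 0 x <= sq x) by (intros; unfold fct_cte; apply Hsq0). specialize (L HH). lra. }
  assert (HIntI : forall x y, x <= y -> Int x y <= I).
  { intros x y Hxy. apply Rnot_lt_le. intros Hlt.
    destruct HI as [_ HI2]. destruct (HI2 (Int x y - I)) as [M HM]; [lra|].
    set (a := Rmin x (- M)). set (b := Rmax y M).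
    assert (a <= x) by apply Rmin_l. assert (a <= - M) by apply Rmin_r.
    assert (y <= b) by apply Rmax_l. assert (M <= b) by apply Rmax_r.
    assert (Hab : a <= b) by lra.
    specialize (HM a b (Hint a b Hab) ltac:(lra) ltac:(lra)).
    assert (E : Int a b = RiemannInt (Hint a b Hab)) by (apply HIntE; exact Hab).
    unfold sq in E. rewrite <- E in HM.
    rewrite <- (HChas a x b) in HM by lra. rewrite <- (HChas x y b) in HM by lra.
    pose proof (HInt0 a x ltac:(lra)). pose proof (HInt0 y b ltac:(lra)).
    apply Rabs_def2 in HM. lra. }
  assert (HdL : forall z, z < x0 -> ~ In z pts -> d z <= 0).
  { intros z Hz Hn. apply (dsign_down k2 z). apply Hd; auto.
    exists (x0 - z). split; [lra|]. intros t Ht. apply Hdec; lra. }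
  assert (HdR : forall z, x0 < z -> ~ In z pts -> 0 <= d z).
  { intros z Hz Hn. apply (dsign_up k2 z). apply Hd; auto.
    exists 1. split; [lra|]. intros t Ht. apply Hinc; lra. }
  assert (EA : forall z, Delta ^ 2 <= k2 z -> sqrt (k2 z) = h z).
  { intros z Hz. unfold h. rewrite Rabs_right by lra. f_equal; ring. }
  assert (EB : forall z, k2 z <= Delta ^ 2 -> sqrt (2 * Delta ^ 2 - k2 z) = h z).
  { intros z Hz. unfold h. rewrite Rabs_left1 by lra. f_equal; ring. }
  assert (HD2p : 0 < Delta ^ 2) by (apply pow_lt; lra).
  assert (RegA : forall a b s (Hab : a <= b), (s = 1 \/ s = -1) ->
     (forall z, a <= z <= b -> Delta ^ 2 <= k2 z) ->
     (forall z, a < z < b -> ~ In z pts -> 0 <= s * d z) -> forall eps, 0 < eps ->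
     Yf ur ui dur dui J eps (h a) a * exp (s * ln (h a)) <=
     Yf ur ui dur dui J eps (h b) b * exp (s * ln (h b)) * exp (2 * Int a b)).
  { intros a b s Hab Hs Hk Hsg eps Heps.
    pose proof (core ur ui dur dui k2 sq (fun z => sqrt (k2 z)) (fun z => / (2 * sqrt (k2 z)) * d z)
      J eps s a b pts (Hint a b Hab) Hur Hdur Hui Hdui HJ Heps Hab Hs) as C.
    cbv beta in C. rewrite (EA a), (EA b) in C by (apply Hk; lra).
    rewrite (HIntE a b (Hint a b Hab) Hab). apply C.
    - intros z Hz. specialize (Hk z Hz). split; [|split].
      + apply cp_comp; [apply Hcont| apply continuity_pt_sqrt; lra].
      + apply sqrt_lt_R0; lra.
      + apply cp_sqmax; auto.
    - intros z Hz Hn. assert (Hkz := Hk z ltac:(lra)). split.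
      + eapply dl_comp; [apply (Hd z Hn) | apply derivable_pt_lim_sqrt; lra | ring].
      + pose proof (Hsg z Hz Hn). assert (0 < / (2 * sqrt (k2 z))).
        { apply Rinv_0_lt_compat. pose proof (sqrt_lt_R0 (k2 z) ltac:(lra)). lra. }
        replace (s * (/ (2 * sqrt (k2 z)) * d z)) with (/ (2 * sqrt (k2 z)) * (s * d z)) by ring.
        apply Rmult_le_pos; lra.
    - intros z Hz. specialize (Hk z Hz). rewrite pow2_sqrt by lra.
      replace (k2 z - k2 z) with 0 by ring. rewrite Rabs_R0.
      pose proof (sqrt_pos (k2 z)). pose proof (Hsq0 z). apply Rmult_le_pos; lra. }
  assert (RegB : forall a b s (Hab : a <= b), (s = 1 \/ s = -1) ->
     (forall z, a <= z <= b -> k2 z <= Delta ^ 2) ->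
     (forall z, a < z < b -> ~ In z pts -> 0 <= s * - d z) -> forall eps, 0 < eps ->
     Yf ur ui dur dui J eps (h a) a * exp (s * ln (h a)) <=
     Yf ur ui dur dui J eps (h b) b * exp (s * ln (h b)) * exp (2 * Int a b)).
  { intros a b s Hab Hs Hk Hsg eps Heps.
    pose proof (core ur ui dur dui k2 sq (fun z => sqrt (2 * Delta ^ 2 - k2 z))
      (fun z => / (2 * sqrt (2 * Delta ^ 2 - k2 z)) * - d z)
      J eps s a b pts (Hint a b Hab) Hur Hdur Hui Hdui HJ Heps Hab Hs) as C.
    cbv beta in C. rewrite (EB a), (EB b) in C by (apply Hk; lra).
    rewrite (HIntE a b (Hint a b Hab) Hab). apply C.
    - intros z Hz. specialize (Hk z Hz). split; [|split].
      + apply cp_comp; [apply cp_minus; [apply cp_const| apply Hcont] | apply continuity_pt_sqrt; lra].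
      + apply sqrt_lt_R0; lra.
      + apply cp_sqmax; auto.
    - intros z Hz Hn. assert (Hkz := Hk z ltac:(lra)). split.
      + eapply dl_comp; [eapply dl_minus; [apply dl_const; reflexivity | apply (Hd z Hn) | reflexivity]
                        | apply derivable_pt_lim_sqrt; lra | ring].
      + pose proof (Hsg z Hz Hn). assert (0 < / (2 * sqrt (2 * Delta ^ 2 - k2 z))).
        { apply Rinv_0_lt_compat. pose proof (sqrt_lt_R0 (2 * Delta ^ 2 - k2 z) ltac:(lra)). lra. }
        replace (s * (/ (2 * sqrt (2 * Delta ^ 2 - k2 z)) * - d z))
          with (/ (2 * sqrt (2 * Delta ^ 2 - k2 z)) * (s * - d z)) by ring.
        apply Rmult_le_pos; lra.
    - intros z Hz. specialize (Hk z Hz). rewrite pow2_sqrt by lra.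
      unfold sq. rewrite Rmax_right by lra.
      rewrite Rabs_right by lra.
      assert (Hs1 : sqrt (Delta ^ 2 - k2 z) <= sqrt (2 * Delta ^ 2 - k2 z)) by (apply sqrt_le_1_alt; lra).
      pose proof (sqrt_sqrt (Delta ^ 2 - k2 z) ltac:(lra)).
      pose proof (sqrt_pos (Delta ^ 2 - k2 z)).
      nra. }
  assert (Hhp : forall z, 0 < h z) by (intros z; pose proof (Hhge z); lra).
  assert (Ex1 : forall z, exp (1 * ln (h z)) = h z).
  { intros z. rewrite Rmult_1_l. apply exp_ln; auto. }
  assert (Exm1 : forall z, exp (-1 * ln (h z)) = / h z).
  { intros z. replace (-1 * ln (h z)) with (- ln (h z)) by ring. rewrite exp_Ropp, exp_ln; auto. }
  assert (HYnn : forall eps z, 0 <= Yf ur ui dur dui J eps (h z) z).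
  { intros eps z. unfold Yf. pose proof (Sf_nn ur ui dur dui (h z) z (Hhp z)).
    pose proof (sqrt_pos (Sf ur ui dur dui (h z) z ^ 2 - 4 * J ^ 2 + eps)). lra. }
  assert (HhD : forall z, k2 z = Delta ^ 2 -> h z = Delta).
  { intros z Hz. unfold h. rewrite Hz. replace (Delta ^ 2 - Delta ^ 2) with 0 by ring.
    rewrite Rabs_R0, Rplus_0_r. apply sqrt_pow2. lra. }
  assert (Hkmd : Delta <= km).
  { destruct (Rle_dec Delta km) as [|Hn]; auto. exfalso. nra. }
  assert (Hkpd : Delta <= kp).
  { destruct (Rle_dec Delta kp) as [|Hn]; auto. exfalso. nra. }
  assert (Left : forall eps, 0 < eps -> forall x, x <= x0 ->
     Yf ur ui dur dui J eps (h x) x <=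
     Yf ur ui dur dui J eps (h x0) x0 * ((km / Delta) * (h x0 / Delta)) * exp (2 * Int x x0)).
  { intros eps Heps x Hx.
    set (Y := fun z => Yf ur ui dur dui J eps (h z) z).
    change (Y x <= Y x0 * ((km / Delta) * (h x0 / Delta)) * exp (2 * Int x x0)).
    assert (HY := HYnn eps). change (forall z, 0 <= Y z) in HY.
    destruct (Rle_dec (k2 x) (Delta ^ 2)) as [Hk|Hk].
    - pose proof (RegB x x0 1 Hx (or_introl eq_refl)) as R.
      assert (R' : Y x * h x <= Y x0 * h x0 * exp (2 * Int x x0)).
      { rewrite <- (Ex1 x), <- (Ex1 x0). apply R; auto.
        + intros z Hz. pose proof (Hdec x z ltac:(lra) ltac:(lra)). lra.
        + intros z Hz Hn. pose proof (HdL z ltac:(lra) Hn). lra. }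
      pose proof (exp_pos (2 * Int x x0)). pose proof (HY x). pose proof (HY x0).
      pose proof (Hhge x). pose proof (Hhp x0).
      apply Rmult_le_reg_r with Delta; [lra|].
      replace (Y x0 * (km / Delta * (h x0 / Delta)) * exp (2 * Int x x0) * Delta)
        with (Y x0 * h x0 * exp (2 * Int x x0) * (km / Delta)) by (field; lra).
      assert (1 <= km / Delta) by (apply Rmult_le_reg_r with Delta; [lra|]; field_simplify; lra).
      assert (0 <= Y x0 * h x0 * exp (2 * Int x x0)) by (apply Rmult_le_pos; [apply Rmult_le_pos|]; lra).
      nra.
    - assert (Hiv : {z | x <= z <= x0 /\ (fun z => k2 z - Delta ^ 2) z = 0}).
      { apply IVT_cor; auto.
        - intros z. apply cp_minus; [apply Hcont| apply cp_const].
        - nra. }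
      destruct Hiv as [al [Hal Hal2]]. simpl in Hal2.
      pose proof (RegA x al (-1) ltac:(lra) (or_intror eq_refl)) as R1.
      assert (R1' : Y x * / h x <= Y al * / h al * exp (2 * Int x al)).
      { rewrite <- (Exm1 x), <- (Exm1 al). apply R1; auto.
        + intros z Hz. pose proof (Hdec z al ltac:(lra) ltac:(lra)). lra.
        + intros z Hz Hn. pose proof (HdL z ltac:(lra) Hn). lra. }
      pose proof (RegB al x0 1 ltac:(lra) (or_introl eq_refl)) as R2.
      assert (R2' : Y al * h al <= Y x0 * h x0 * exp (2 * Int al x0)).
      { rewrite <- (Ex1 al), <- (Ex1 x0). apply R2; auto.
        + intros z Hz. pose proof (Hdec al z ltac:(lra) ltac:(lra)). lra.
        + intros z Hz Hn. pose proof (HdL z ltac:(lra) Hn). lra. }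
      rewrite (HhD al) in R1', R2' by lra.
      rewrite <- (HChas x al x0) by lra. rewrite Rmult_plus_distr_l, exp_plus.
      assert (Hhx : h x <= km).
      { rewrite <- (EA x) by lra. rewrite <- (sqrt_pow2 km) by lra. apply sqrt_le_1_alt. apply HkL; auto. }
      pose proof (exp_pos (2 * Int x al)). pose proof (exp_pos (2 * Int al x0)).
      pose proof (HY x). pose proof (HY al). pose proof (HY x0). pose proof (Hhp x). pose proof (Hhp x0).
      set (e1 := exp (2 * Int x al)) in *. set (e2 := exp (2 * Int al x0)) in *.
      assert (A1 : Y x <= Y al * e1 * (h x / Delta)).
      { apply Rmult_le_reg_r with (/ h x); [apply Rinv_0_lt_compat; lra|].
        replace (Y al * e1 * (h x / Delta) * / h x) with (Y al * / Delta * e1) by (field; lra). lra. }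
      assert (A2 : Y al <= Y x0 * h x0 * e2 / Delta).
      { apply Rmult_le_reg_r with Delta; [lra|].
        replace (Y x0 * h x0 * e2 / Delta * Delta) with (Y x0 * h x0 * e2) by (field; lra). lra. }
      apply Rle_trans with (Y x0 * h x0 * e2 / Delta * e1 * (h x / Delta)).
      + apply Rle_trans with (Y al * e1 * (h x / Delta)); auto.
        apply Rmult_le_compat_r; [apply Rmult_le_pos; [lra| apply Rlt_le, Rinv_0_lt_compat; lra]|].
        apply Rmult_le_compat_r; lra.
      + replace (Y x0 * h x0 * e2 / Delta * e1 * (h x / Delta))
          with ((Y x0 * h x0 * e2 * e1 / (Delta * Delta)) * h x) by (field; lra).
        replace (Y x0 * (km / Delta * (h x0 / Delta)) * (e1 * e2))
          with ((Y x0 * h x0 * e2 * e1 / (Delta * Delta)) * km) by (field; lra).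
        apply Rmult_le_compat_l; auto.
        unfold Rdiv. apply Rmult_le_pos; [|apply Rlt_le, Rinv_0_lt_compat; nra].
        apply Rmult_le_pos; [apply Rmult_le_pos; [apply Rmult_le_pos|]|]; lra. }
  assert (Right : forall eps, 0 < eps -> forall y, x0 <= y ->
     Yf ur ui dur dui J eps (h x0) x0 <=
     Yf ur ui dur dui J eps (h y) y * ((h x0 / Delta) * (kp / Delta)) * exp (2 * Int x0 y)).
  { intros eps Heps y Hy.
    set (Y := fun z => Yf ur ui dur dui J eps (h z) z).
    change (Y x0 <= Y y * ((h x0 / Delta) * (kp / Delta)) * exp (2 * Int x0 y)).
    assert (HY := HYnn eps). change (forall z, 0 <= Y z) in HY.
    assert (1 <= kp / Delta) by (apply Rmult_le_reg_r with Delta; [lra|]; field_simplify; lra).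
    destruct (Rle_dec (k2 y) (Delta ^ 2)) as [Hk|Hk].
    - pose proof (RegB x0 y (-1) Hy (or_intror eq_refl)) as R.
      assert (R' : Y x0 * / h x0 <= Y y * / h y * exp (2 * Int x0 y)).
      { rewrite <- (Exm1 y), <- (Exm1 x0). apply R; auto.
        + intros z Hz. pose proof (Hinc z y ltac:(lra) ltac:(lra)). lra.
        + intros z Hz Hn. pose proof (HdR z ltac:(lra) Hn). lra. }
      pose proof (exp_pos (2 * Int x0 y)). pose proof (HY y). pose proof (HY x0).
      pose proof (Hhge y). pose proof (Hhp x0). pose proof (Hhp y).
      set (e := exp (2 * Int x0 y)) in *.
      assert (A : Y x0 <= Y y * e * h x0 / Delta).
      { apply Rmult_le_reg_r with (/ h x0); [apply Rinv_0_lt_compat; lra|].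
        replace (Y y * e * h x0 / Delta * / h x0) with (Y y * e / Delta) by (field; lra).
        apply Rle_trans with (Y y * / h y * e). lra.
        replace (Y y * / h y * e) with (Y y * e * / h y) by ring.
        unfold Rdiv. apply Rmult_le_compat_l; [apply Rmult_le_pos; lra|].
        apply Rinv_le_contravar; lra. }
      apply Rle_trans with (Y y * e * h x0 / Delta); auto.
      replace (Y y * (h x0 / Delta * (kp / Delta)) * e) with (Y y * e * h x0 / Delta * (kp / Delta)) by (field; lra).
      assert (0 <= Y y * e * h x0 / Delta).
      { unfold Rdiv. apply Rmult_le_pos; [apply Rmult_le_pos; [apply Rmult_le_pos|]|apply Rlt_le, Rinv_0_lt_compat]; lra. }
      nra.
    - assert (Hiv : {z | x0 <= z <= y /\ (fun z => k2 z - Delta ^ 2) z = 0}).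
      { apply IVT_cor; auto.
        - intros z. apply cp_minus; [apply Hcont| apply cp_const].
        - nra. }
      destruct Hiv as [be [Hbe Hbe2]]. simpl in Hbe2.
      pose proof (RegB x0 be (-1) ltac:(lra) (or_intror eq_refl)) as R1.
      assert (R1' : Y x0 * / h x0 <= Y be * / h be * exp (2 * Int x0 be)).
      { rewrite <- (Exm1 x0), <- (Exm1 be). apply R1; auto.
        + intros z Hz. pose proof (Hinc z be ltac:(lra) ltac:(lra)). lra.
        + intros z Hz Hn. pose proof (HdR z ltac:(lra) Hn). lra. }
      pose proof (RegA be y 1 ltac:(lra) (or_introl eq_refl)) as R2.
      assert (R2' : Y be * h be <= Y y * h y * exp (2 * Int be y)).
      { rewrite <- (Ex1 be), <- (Ex1 y). apply R2; auto.
        + intros z Hz. pose proof (Hinc be z ltac:(lra) ltac:(lra)). lra.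
        + intros z Hz Hn. pose proof (HdR z ltac:(lra) Hn). lra. }
      rewrite (HhD be) in R1', R2' by lra.
      rewrite <- (HChas x0 be y) by lra. rewrite Rmult_plus_distr_l, exp_plus.
      assert (Hhy : h y <= kp).
      { rewrite <- (EA y) by lra. rewrite <- (sqrt_pow2 kp) by lra. apply sqrt_le_1_alt. apply HkR; auto. }
      pose proof (exp_pos (2 * Int x0 be)). pose proof (exp_pos (2 * Int be y)).
      pose proof (HY y). pose proof (HY be). pose proof (HY x0). pose proof (Hhp y). pose proof (Hhp x0).
      set (e1 := exp (2 * Int x0 be)) in *. set (e2 := exp (2 * Int be y)) in *.
      assert (A1 : Y x0 <= Y be * e1 * (h x0 / Delta)).
      { apply Rmult_le_reg_r with (/ h x0); [apply Rinv_0_lt_compat; lra|].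
        replace (Y be * e1 * (h x0 / Delta) * / h x0) with (Y be * / Delta * e1) by (field; lra). lra. }
      assert (A2 : Y be <= Y y * h y * e2 / Delta).
      { apply Rmult_le_reg_r with Delta; [lra|].
        replace (Y y * h y * e2 / Delta * Delta) with (Y y * h y * e2) by (field; lra). lra. }
      apply Rle_trans with (Y y * h y * e2 / Delta * e1 * (h x0 / Delta)).
      + apply Rle_trans with (Y be * e1 * (h x0 / Delta)); auto.
        apply Rmult_le_compat_r; [apply Rmult_le_pos; [lra| apply Rlt_le, Rinv_0_lt_compat; lra]|].
        apply Rmult_le_compat_r; lra.
      + replace (Y y * h y * e2 / Delta * e1 * (h x0 / Delta))
          with ((Y y * h x0 * e2 * e1 / (Delta * Delta)) * h y) by (field; lra).
        replace (Y y * (h x0 / Delta * (kp / Delta)) * (e1 * e2))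
          with ((Y y * h x0 * e2 * e1 / (Delta * Delta)) * kp) by (field; lra).
        apply Rmult_le_compat_l; auto.
        unfold Rdiv. apply Rmult_le_pos; [|apply Rlt_le, Rinv_0_lt_compat; nra].
        apply Rmult_le_pos; [apply Rmult_le_pos; [apply Rmult_le_pos|]|]; lra. }
  assert (Hfac : forall x y, x <= y ->
     (km / Delta * (h x0 / Delta)) * (h x0 / Delta * (kp / Delta)) * exp (2 * Int x y) <= exp (2 * B)).
  { intros x y Hxy.
    assert (Hm0 : sqrt (Delta ^ 2 - k2 x0) <= m).
    { destruct Hm as [_ Hm2]. specialize (Hm2 x0). rewrite Rmax_right in Hm2 by lra. exact Hm2. }
    assert (Hmp : 0 <= m) by (pose proof (sqrt_pos (Delta ^ 2 - k2 x0)); lra).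
    assert (Hm2 : Delta ^ 2 - k2 x0 <= m ^ 2).
    { rewrite <- (pow2_sqrt (Delta ^ 2 - k2 x0)) by lra. pose proof (sqrt_pos (Delta ^ 2 - k2 x0)). nra. }
    assert (Hh0 : h x0 ^ 2 = 2 * Delta ^ 2 - k2 x0).
    { unfold h. rewrite pow2_sqrt. rewrite Rabs_left1 by lra. ring. pose proof (Rabs_pos (k2 x0 - Delta ^ 2)); lra. }
    assert (HE1 : 1 + m / Delta <= exp (m / Delta)) by apply exp_ineq1_le.
    assert (Hmd : 0 <= m / Delta) by (apply Rmult_le_pos; [lra| apply Rlt_le, Rinv_0_lt_compat; lra]).
    assert (Hq : (h x0 / Delta) * (h x0 / Delta) <= exp (2 * (m / Delta))).
    { replace (2 * (m / Delta)) with (m / Delta + m / Delta) by ring. rewrite exp_plus.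
      apply Rle_trans with ((1 + m / Delta) * (1 + m / Delta)); [|apply Rmult_le_compat; lra].
      replace ((h x0 / Delta) * (h x0 / Delta)) with (h x0 ^ 2 / Delta ^ 2) by (field; lra).
      rewrite Hh0. apply Rle_trans with (1 + (m / Delta) ^ 2); [|nra].
      replace (1 + (m / Delta) ^ 2) with ((Delta ^ 2 + m ^ 2) / Delta ^ 2) by (field; lra).
      apply Rmult_le_compat_r; [apply Rlt_le, Rinv_0_lt_compat; lra| lra]. }
    assert (HB : exp (2 * B) = (kp * km / Delta ^ 2) * exp (2 * (m / Delta)) * exp (2 * I)).
    { rewrite <- (exp_ln (kp * km / Delta ^ 2)) at 1 by (apply Rdiv_lt_0_compat; [nra|lra]).
      rewrite <- !exp_plus. f_equal. unfold B. field. lra. }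
    rewrite HB.
    assert (HII : exp (2 * Int x y) <= exp (2 * I)).
    { destruct (Req_dec (Int x y) I) as [E|E]; [rewrite E; lra|].
      apply Rlt_le, exp_increasing. pose proof (HIntI x y Hxy). lra. }
    pose proof (exp_pos (2 * Int x y)).
    replace (km / Delta * (h x0 / Delta) * (h x0 / Delta * (kp / Delta)) * exp (2 * Int x y))
      with ((kp * km / Delta ^ 2) * ((h x0 / Delta) * (h x0 / Delta)) * exp (2 * Int x y)) by (field; lra).
    assert (0 < kp * km / Delta ^ 2) by (apply Rdiv_lt_0_compat; [nra|lra]).
    apply Rmult_le_compat; try lra.
    - assert (0 <= h x0 / Delta) by (pose proof (Hhp x0); apply Rmult_le_pos; [lra| apply Rlt_le, Rinv_0_lt_compat; lra]).
      apply Rmult_le_pos; [lra| nra].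
    - apply Rmult_le_compat_l; lra. }
  assert (MainI : forall eps, 0 < eps -> forall x y, x <= x0 -> x0 <= y ->
     Yf ur ui dur dui J eps (h x) x <= Yf ur ui dur dui J eps (h y) y * exp (2 * B)).
  { intros eps Heps x y Hx Hy.
    pose proof (Left eps Heps x Hx) as L. pose proof (Right eps Heps y Hy) as R.
    pose proof (HYnn eps x0). pose proof (HYnn eps y).
    pose proof (exp_pos (2 * Int x x0)). pose proof (exp_pos (2 * Int x0 y)).
    assert (0 <= km / Delta * (h x0 / Delta)).
    { apply Rmult_le_pos; apply Rmult_le_pos; try lra; try (apply Rlt_le, Rinv_0_lt_compat; lra). pose proof (Hhp x0); lra. }
    eapply Rle_trans; [exact L|].
    eapply Rle_trans.
    { apply Rmult_le_compat_r; [lra|]. apply Rmult_le_compat_r; [lra|]. exact R. }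
    pose proof (Hfac x y ltac:(lra)) as F. rewrite <- (HChas x x0 y) in F by lra.
    rewrite Rmult_plus_distr_l, exp_plus in F.
    set (c1 := km / Delta * (h x0 / Delta)) in *.
    set (c2 := h x0 / Delta * (kp / Delta)) in *.
    replace (Yf ur ui dur dui J eps (h y) y * c2 * exp (2 * Int x0 y) * c1 * exp (2 * Int x x0))
      with (Yf ur ui dur dui J eps (h y) y * (c1 * c2 * (exp (2 * Int x x0) * exp (2 * Int x0 y)))) by ring.
    apply Rmult_le_compat_l; auto. }
  set (qa := qf tr (- ti) kp). set (qb := qf ti tr kp).
  set (dqa := dqf tr (- ti) kp). set (dqb := dqf ti tr kp).
  assert (R1 : lim_pinf (fun x => ur x - qa x) 0).
  { apply lp_ext with (2 := HRr). intros x. unfold qa, qf. ring. }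
  assert (R2 : lim_pinf (fun x => ui x - qb x) 0).
  { apply lp_ext with (2 := HRi). intros x. unfold qb, qf. ring. }
  assert (R3 := asym_p ur dur k2 kp tr (- ti) Hur Hdur Hlimp R1).
  assert (R4 := asym_p ui dui k2 kp ti tr Hui Hdui Hlimp R2).
  assert (Rh : lim_pinf h kp).
  { pose proof (lp_comp k2 (fun t => sqrt (Delta ^ 2 + Rabs (t - Delta ^ 2))) (kp ^ 2) Hlimp (cont_hfun Delta _)) as L.
    cbv beta in L. rewrite Rabs_right in L by lra. replace (Delta ^ 2 + (kp ^ 2 - Delta ^ 2)) with (kp ^ 2) in L by ring.
    rewrite sqrt_pow2 in L by lra. exact L. }
  set (t2 := tr ^ 2 + ti ^ 2).
  assert (SR : lim_pinf (fun x => Sf ur ui dur dui (h x) x) (2 * kp * t2)).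
  { pose proof (LS ur ui dur dui qa qb dqa dqb h kp (Bnd_qf _ _ _) (Bnd_qf _ _ _) (Bnd_dqf _ _ _) (Bnd_dqf _ _ _)
       R1 R2 R3 R4 Rh Hkp) as L.
    apply lp_0. apply lp_ext with (2 := L). intros x. unfold qa, qb, dqa, dqb. rewrite qf_S by lra.
    unfold t2. ring. }
  assert (JR : J = kp * t2).
  { pose proof (LJ ur ui dur dui qa qb dqa dqb (Bnd_qf _ _ _) (Bnd_qf _ _ _) (Bnd_dqf _ _ _) (Bnd_dqf _ _ _)
       R1 R2 R3 R4) as L.
    assert (L' : lim_pinf (fun _ => J - kp * t2) 0).
    { apply lp_ext with (2 := L). intros x. rewrite HJ. unfold qa, qb, dqa, dqb. rewrite qf_J. unfold t2. ring. }
    apply lp_const0 in L'. lra. }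
  set (pa := qf (1 + rr) ri km). set (pb := qf ri (1 - rr) km).
  set (dpa := dqf (1 + rr) ri km). set (dpb := dqf ri (1 - rr) km).
  assert (L1 : lim_minf (fun x => ur x - pa x) 0).
  { apply lm_lp. apply lm_lp in HLr. apply lp_ext with (2 := HLr). intros x. unfold pa, qf. ring. }
  assert (L2 : lim_minf (fun x => ui x - pb x) 0).
  { apply lm_lp. apply lm_lp in HLi. apply lp_ext with (2 := HLi). intros x. unfold pb, qf. ring. }
  assert (L3 := asym_m ur dur k2 km (1 + rr) ri Hur Hdur Hlimm L1).
  assert (L4 := asym_m ui dui k2 km ri (1 - rr) Hui Hdui Hlimm L2).
  apply lm_lp in L1. apply lm_lp in L2. apply lm_lp in L3. apply lm_lp in L4.
  assert (Lh : lim_pinf (fun x => h (- x)) km).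
  { apply lm_lp in Hlimm.
    pose proof (lp_comp (fun x => k2 (- x)) (fun t => sqrt (Delta ^ 2 + Rabs (t - Delta ^ 2))) (km ^ 2) Hlimm (cont_hfun Delta _)) as L.
    cbv beta in L. rewrite Rabs_right in L by lra. replace (Delta ^ 2 + (km ^ 2 - Delta ^ 2)) with (km ^ 2) in L by ring.
    rewrite sqrt_pow2 in L by lra. exact L. }
  set (r2 := rr ^ 2 + ri ^ 2).
  assert (SL : lim_minf (fun x => Sf ur ui dur dui (h x) x) (2 * km * (1 + r2))).
  { pose proof (LS (fun x => ur (- x)) (fun x => ui (- x)) (fun x => dur (- x)) (fun x => dui (- x))
       (fun x => pa (- x)) (fun x => pb (- x)) (fun x => dpa (- x)) (fun x => dpb (- x)) (fun x => h (- x)) km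
       (Bnd_qfn _ _ _) (Bnd_qfn _ _ _) (Bnd_dqfn _ _ _) (Bnd_dqfn _ _ _)
       L1 L2 L3 L4 Lh Hkm) as L.
    apply lm_lp. apply lp_0. apply lp_ext with (2 := L). intros x. unfold pa, pb, dpa, dpb. rewrite qf_S by lra.
    unfold r2, Sf. ring. }
  assert (JL : J = km * (1 - r2)).
  { pose proof (LJ (fun x => ur (- x)) (fun x => ui (- x)) (fun x => dur (- x)) (fun x => dui (- x))
       (fun x => pa (- x)) (fun x => pb (- x)) (fun x => dpa (- x)) (fun x => dpb (- x))
       (Bnd_qfn _ _ _) (Bnd_qfn _ _ _) (Bnd_dqfn _ _ _) (Bnd_dqfn _ _ _)
       L1 L2 L3 L4) as L.
    assert (L' : lim_pinf (fun _ => J - km * (1 - r2)) 0).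
    { apply lp_ext with (2 := L). intros x. rewrite HJ. unfold pa, pb, dpa, dpb. rewrite qf_J. unfold r2. ring. }
    apply lp_const0 in L'. lra. }
  assert (Hr2 : 0 <= r2) by (unfold r2; nra).
  assert (Kin : forall eps, 0 < eps ->
     2 * km * (1 + r2) + 4 * km * sqrt r2 <= 2 * kp * t2 * exp (2 * B) + exp (2 * B) * sqrt eps).
  { intros eps Heps.
    set (F := fun t => t + sqrt (t ^ 2 - 4 * J ^ 2 + eps)).
    assert (E1 : (2 * kp * t2) ^ 2 - 4 * J ^ 2 + eps = eps) by (rewrite JR; ring).
    assert (E2 : (2 * km * (1 + r2)) ^ 2 - 4 * J ^ 2 + eps = 16 * km ^ 2 * r2 + eps) by (rewrite JL; ring).
    assert (YR : lim_pinf (fun y => Yf ur ui dur dui J eps (h y) y) (F (2 * kp * t2))).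
    { apply (lp_comp (fun y => Sf ur ui dur dui (h y) y) F); auto. apply cont_F. lra. }
    assert (YL : lim_minf (fun y => Yf ur ui dur dui J eps (h y) y) (F (2 * km * (1 + r2)))).
    { apply lm_lp. apply lm_lp in SL.
      apply (lp_comp (fun y => Sf ur ui dur dui (h (- y)) (- y)) F); auto. apply cont_F.
      rewrite E2. pose proof (pow2_ge_0 km). nra. }
    assert (YR' : lim_pinf (fun y => Yf ur ui dur dui J eps (h y) y * exp (2 * B)) (F (2 * kp * t2) * exp (2 * B))).
    { apply lp_mul; auto. apply lp_const. }
    pose proof (lp_le _ _ _ _ x0 YL YR' (MainI eps Heps)) as LE.
    unfold F in LE. rewrite E1, E2 in LE.
    assert (Hs : 4 * km * sqrt r2 <= sqrt (16 * km ^ 2 * r2 + eps)).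
    { rewrite <- (sqrt_pow2 (4 * km * sqrt r2)).
      - apply sqrt_le_1_alt. replace ((4 * km * sqrt r2) ^ 2) with (16 * km ^ 2 * (sqrt r2 ^ 2)) by ring.
        rewrite pow2_sqrt by lra. lra.
      - pose proof (sqrt_pos r2). nra. }
    lra. }
  assert (Fin : 2 * km * (1 + r2) + 4 * km * sqrt r2 <= 2 * kp * t2 * exp (2 * B)).
  { apply (eps0 _ _ (exp (2 * B))); [apply Rlt_le, exp_pos|]. exact Kin. }
  unfold transmission. fold t2.
  apply (final_alg km r2 (kp / km * t2) B Hkm Hr2).
  - apply Rmult_eq_reg_l with km; [|lra]. field_simplify; [|lra]. rewrite <- JR, JL. ring.
  - replace (2 * km * (kp / km * t2)) with (2 * kp * t2) by (field; lra). exact Fin.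
Qed.
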